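(* Suppose $C\subseteq\mathbb{R}^n$ is smoothly approximately convex at $\bar x\in C$, and let $H:U\to\mathbb{R}^m$, where $U$ is an open neighborhood of $\bar x$ in $\mathbb{R}^n$, be a $\mathcal{C}^{(1)}$-smooth embedding. Then $H(C\cap U)$ is smoothly approximately convex at $H(\bar x)$.
   Context: A $\mathcal{C}^{(1)}$-smooth embedding is a $\mathcal{C}^{(1)}$ map $H$ with $\nabla H(w)$ injective for all $w$ that is a homeomorphism onto its image. A set $S\subseteq\mathbb{R}^N$ is smoothly approximately convex at $\bar z\in S$ if for every $\epsilon>0$ there is a neighborhood $W$ of $\bar z$ such that for all $z,z'\in S\cap W$ there is a map $\gamma:[0,1]\to S$, extending to a $\mathcal{C}^{(1)}$ map on an open neighborhood of $[0,1]$, with $\gamma(0)=z,\gamma(1)=z'$ and $\|\gamma'(t)-(z'-z)\|\le\epsilon\|z'-z\|$ for all $t\in[0,1]$. *)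

(* Defs.v *)
From HB Require Import structures.
From mathcomp Require Import all_boot all_order all_algebra.
From mathcomp Require Import all_classical all_reals all_analysis.
Set Implicit Arguments. Unset Strict Implicit. Unset Printing Implicit Defensive.
Import Order.TTheory GRing.Theory Num.Theory.
Import numFieldNormedType.Exports.
Local Open Scope classical_set_scope.
Local Open Scope ring_scope.

Definition C1_on (R : realType) (n m : nat) (U : set 'rV[R]_n)
    (f : 'rV[R]_n -> 'rV[R]_m) : Prop :=
  (forall w, U w -> differentiable f w) /\ {in U, continuous (jacobian f)}.

Definition homeo_onto_image (R : realType) (n m : nat) (U : set 'rV[R]_n)
    (H : 'rV[R]_n -> 'rV[R]_m) : Prop :=
  exists G : 'rV[R]_m -> 'rV[R]_n,
    (forall w, U w -> G (H w) = w) /\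
    {within U, continuous H} /\ {within H @` U, continuous G}.

Definition C1_embedding (R : realType) (n m : nat) (U : set 'rV[R]_n)
    (H : 'rV[R]_n -> 'rV[R]_m) : Prop :=
  C1_on U H /\ (forall w, U w -> injective ('d H w)) /\ homeo_onto_image U H.

(* gamma : [0,1] -> R^N extends to a C^1 map on an open neighbourhood of [0,1];
   gamma itself (a function on all of R) plays the role of the extension. *)
Definition C1_curve (R : realType) (N : nat) (gamma : R -> 'rV[R]_N) : Prop :=
  exists O : set R, open O /\ `[0, 1]%classic `<=` O /\
    (forall t, O t -> derivable gamma t 1) /\ {in O, continuous (derive1 gamma)}.

Definition smoothly_approx_convex (R : realType) (N : nat)
    (S : set 'rV[R]_N) (zbar : 'rV[R]_N) : Prop :=
  forall eps : R, 0 < eps ->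
    exists W : set 'rV[R]_N, nbhs zbar W /\
      forall z z', S z -> W z -> S z' -> W z' ->
        exists gamma : R -> 'rV[R]_N,
          C1_curve gamma /\
          (forall t, `[0, 1]%classic t -> S (gamma t)) /\
          gamma 0 = z /\ gamma 1 = z' /\
          (forall t, `[0, 1]%classic t -> `|(derive1 gamma) t - (z' - z)| <= eps * `|z' - z|).

(* Main.v *)
Require Import Defs.
From HB Require Import structures.
From mathcomp Require Import all_boot all_order all_algebra.
From mathcomp Require Import all_classical all_reals all_analysis.
From mathcomp Require Import lra ring.
Import Order.TTheory GRing.Theory Num.Theory.
Import numFieldNormedType.Exports.
Local Open Scope classical_set_scope.
Local Open Scope ring_scope.

Section Aux.
Context {R : realType}.
Implicit Types p q : nat.

Lemma entry_le {p q} (M : 'M[R]_(p,q)) i j : `|M i j| <= `|M|.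
Proof.
rewrite [leRHS]/Num.Def.normr/= mx_normrE.
exact: (le_bigmax _ (fun ij : 'I_p * 'I_q => `|M ij.1 ij.2|) (i,j)).
Qed.

Lemma norm_mulmx {p q} (u : 'rV[R]_p) (M : 'M[R]_(p,q)) :
  `|u *m M| <= p%:R * (`|u| * `|M|).
Proof.
rewrite [leLHS]/Num.Def.normr/= mx_normrE.
apply: bigmax_le; first by rewrite mulr_ge0 // mulr_ge0.
move=> [i j] _ /=; rewrite mxE.
rewrite (le_trans (ler_norm_sum _ _ _)) //.
rewrite (@le_trans _ _ (\sum_(k < p) (`|u| * `|M|))) //.
  by apply: ler_sum => k _; rewrite normrM ler_pM ?entry_le.
by rewrite sumr_const card_ord mulr_natl.
Qed.

Lemma norm_mulmx' {p q} (u : 'rV[R]_p) (M : 'M[R]_(p,q)) :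
  `|u *m M| <= (p%:R + 1) * (`|u| * `|M|).
Proof.
rewrite (le_trans (norm_mulmx u M)) // ler_wpM2r ?mulr_ge0 //.
by rewrite lerDl.
Qed.


Lemma comp_is_derive {N M} (F : R -> 'M[R]_(N,M)) x i j : derivable F x 1 ->
  is_derive x 1 (fun t => F t i j) ('D_1 F x i j).
Proof.
move=> dF; rewrite (derive_mx dF) mxE.
by apply: derivableP; move/derivable_mxP: dF; apply.
Qed.

Lemma mvt_row {N} (F : R -> 'rV[R]_N) (a b k : R) : a <= b ->
  (forall s, a <= s <= b -> derivable F s 1) ->
  (forall s, a <= s <= b -> `|'D_1 F s| <= k) -> `|F b - F a| <= k * (b - a).
Proof.
move=> ab dF bF.
have k0 : 0 <= k by apply: le_trans (bF a _); rewrite ?lexx ?ab.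
rewrite [leLHS]/Num.Def.normr/= mx_normrE.
apply: bigmax_le => [|[i j] _ /=]; first by rewrite mulr_ge0 // subr_ge0.
rewrite !mxE.
have hd : forall x, x \in `]a, b[%R -> is_derive x 1 (fun t => F t i j) ('D_1 F x i j).
  move=> x; rewrite in_itv /= => /andP[ax xb].
  by apply: comp_is_derive; apply: dF; rewrite !ltW.
have hc : {within `[a, b], continuous (fun t => F t i j)}.
  apply: continuous_in_subspaceT => x; rewrite inE /= in_itv /= => /andP[ax xb].
  apply: differentiable_continuous; apply/derivable1_diffP.
  by move/derivable_mxP: (dF x (introT andP (conj ax xb))); apply.
have [c] := MVT_segment ab hd hc.
  rewrite in_itv /= => /andP[ac cb] ->.
  rewrite normrM (ger0_norm (x := b - a)) ?subr_ge0 //.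
  apply: ler_wpM2r; first by rewrite subr_ge0.
  by apply: le_trans (entry_le _ _ _) (bF c _); rewrite ac cb.
Qed.

Lemma mulmx_cont {T : topologicalType} p q (u : T -> 'rV[R]_p)
  (M : T -> 'M[R]_(p,q)) t :
  {for t, continuous u} -> {for t, continuous M} ->
  {for t, continuous (fun x => u x *m M x)}.
Proof.
move=> cu cM; apply/cvgrPdist_le => e e0.
pose k : R := p%:R + 1; pose a : R := `|u t| + 1; pose b : R := `|M t| + 1.
have k0 : 0 < k by rewrite /k ltr_wpDl.
have a0 : 0 < a by rewrite /a ltr_wpDl.
have b0 : 0 < b by rewrite /b ltr_wpDl.
pose d := Num.min 1 (e / (k * (a + b))).
have d0 : 0 < d by rewrite lt_min ltr01 divr_gt0 // mulr_gt0 // addr_gt0.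
have d1 : d <= 1 by rewrite /d ge_min lexx.
have kab : 0 < k * (a + b) by rewrite mulr_gt0 // addr_gt0.
have dle : d <= e / (k * (a + b)).
  by rewrite /d minElt; case: ifP => [/ltW|]. 
have de : d * (k * (a + b)) <= e by rewrite -ler_pdivlMr.
move/cvgrPdist_le: cu => /(_ d d0) cu.
move/cvgrPdist_le: cM => /(_ d d0) cM.
near=> x.
have hu : `|u t - u x| <= d by near: x.
have hM : `|M t - M x| <= d by near: x.
have -> : u t *m M t - u x *m M x = (u t - u x) *m M t + u x *m (M t - M x).
  by rewrite mulmxBl mulmxBr addrA subrK.
rewrite (le_trans (ler_normD _ _)) // (le_trans _ de) //.
have hux : `|u x| <= a.
  rewrite /a; have := ler_normD (u t) (u x - u t).
  rewrite addrC subrK => /le_trans; apply; rewrite lerD2l -normrN opprB.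
  exact: le_trans hu d1.
rewrite (le_trans (lerD (norm_mulmx' _ _) (norm_mulmx' _ _))) //.
rewrite -mulrDr -/k mulrCA (ler_wpM2l (ltW k0)) // mulrDr addrC.
rewrite lerD //.
  by rewrite [d * a]mulrC ler_pM.
by rewrite ler_pM // /b lerDl.
Unshelve. all: by end_near.
Qed.


Lemma derive_line {V W : normedModType R} {f : V -> W} {d z : V} {s : R} :
  derivable f (s *: d + z) d ->
  derivable (fun t : R => f (t *: d + z)) s 1 /\
  'D_1 (fun t : R => f (t *: d + z)) s = 'D_d f (s *: d + z).
Proof.
have E : (fun h : R => h^-1 *: (((fun t : R => f (t *: d + z)) \o shift s) (h *: 1)
            - (fun t : R => f (t *: d + z)) s)) =
         (fun h : R => h^-1 *: ((f \o shift (s *: d + z)) (h *: d) - f (s *: d + z))).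
  apply/funext => h /=; rewrite /shift [_%:A]mulr1 scalerDl addrA //.
by move=> df; rewrite /derivable /derive E; split.
Qed.

Lemma derive1_comp_mx p q (g : R -> 'rV[R]_p) (f : 'rV[R]_p -> 'rV[R]_q) s :
  differentiable g s -> differentiable f (g s) ->
  derive1 (f \o g) s = derive1 g s *m jacobian f (g s).
Proof.
move=> dg df; rewrite derive1E'; last exact: differentiable_comp.
by rewrite diff_comp // /= derive1E' // /jacobian mul_rV_lin1.
Qed.

Lemma fin_ineq (x1 y1 z1 : R) : x1 <= 2 * y1 -> y1 <= z1 -> x1 / 4 + x1 / 8 + x1 / 8 <= z1.
Proof. by lra. Qed.

End Aux.

Theorem lemma3p5 (R : realType) (n m : nat) (C U : set 'rV[R]_n)
    (xbar : 'rV[R]_n) (H : 'rV[R]_n -> 'rV[R]_m) :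
  C xbar -> smoothly_approx_convex C xbar ->
  open U -> U xbar -> C1_embedding U H ->
  smoothly_approx_convex (H @` (C `&` U)) (H xbar).
Proof.
move=> Cx sac oU Ux [[dH cJ] [injD [G [GH [cH cG]]]]].
pose J := jacobian H; pose A := J xbar.
have dJ : forall x v, 'd H x v = v *m J x.
  by move=> x v; rewrite /J /jacobian mul_rV_lin1.
have [B AB] : exists B : 'M[R]_(m, n), A *m B = 1%:M.
  apply/row_freeP/inj_row_free => v vA0.
  by apply: (injD xbar Ux); rewrite linear0 dJ.
pose cB : R := (m%:R + 1) * (`|B| + 1).
have cB1 : 1 <= cB by rewrite mulr_ege1 // lerDr.
have cB0 : 0 < cB by apply: lt_le_trans cB1.
have lowb : forall v : 'rV[R]_n, `|v| <= cB * `|v *m A|.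
  move=> v; have := norm_mulmx' (v *m A) B; rewrite -mulmxA AB mulmx1.
  move=> /le_trans; apply; rewrite /cB -mulrA ler_wpM2l //.
  by rewrite mulrC ler_wpM2r // lerDl.
pose K : R := n%:R + 1.
have K1 : 1 <= K by rewrite lerDr.
have K0 : 0 < K by apply: lt_le_trans K1.
move=> eps0 eps00.
pose eps : R := Num.min eps0 1.
have eps0p : 0 < eps by rewrite lt_min eps00 ltr01.
have eps1 : eps <= 1 by rewrite /eps minElt; case: ifP => [/ltW|].
have epseps0 : eps <= eps0.
  by rewrite /eps minElt; case: ifP => [_|/negbT]; rewrite ?lexx // -leNgt.
pose eta := eps / (8 * (K * cB)).
have KcB1 : 1 <= K * cB by rewrite mulr_ege1.
have eta0 : 0 < eta by rewrite divr_gt0 // mulr_gt0 // mulr_gt0.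
have eta1 : eta <= 1.
  by rewrite ler_pdivrMr ?mul1r ?mulr_gt0 //; lra.
pose a1 : R := `|A| + 1.
have a11 : 1 <= a1 by rewrite lerDr.
pose eps' := eps / (4 * (K * (a1 * cB))).
have eps'0 : 0 < eps'.
  by rewrite divr_gt0 // !mulr_gt0 // (lt_le_trans ltr01 a11).
have eps'1 : eps' <= 1.
  have : 1 <= K * (a1 * cB) by rewrite mulr_ege1 // mulr_ege1.
  by rewrite ler_pdivrMr ?mul1r ?mulr_gt0 //; [lra|lra].
have [WC [nWC WCprop]] := sac eps' eps'0.
have nU : nbhs xbar U by move: oU; rewrite openE => /(_ xbar Ux).
have nJ : \forall p \near xbar, `|A - J p| <= eta.
  by move: (cJ xbar); rewrite inE => /(_ Ux) /cvgrPdist_le /(_ eta eta0).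
have nP : nbhs xbar (fun p => (U p /\ `|A - J p| <= eta) /\ WC p).
  by near=> p; split; [split|]; near: p.
have /nbhs_ballP[r r0 rP] := nP.
pose rho := r / 5.
have rho0 : 0 < rho by rewrite divr_gt0.
have Pr : forall p, `|xbar - p| < r -> (U p /\ `|A - J p| <= eta) /\ WC p.
  by move=> p hp; apply: rP; rewrite -ball_normE.
have HU : (H @` U) (H xbar) by exists xbar.
have nW : nbhs (H xbar) (fun y => (H @` U) y -> `|xbar - G y| < rho).
  have := (subspace_continuousP _ _).1 cG (H xbar) HU.
  rewrite /from_subspace GH // => /(_ _ (nbhsx_ballx xbar rho rho0)).
  by rewrite -ball_normE.
exists (fun y => (H @` U) y -> `|xbar - G y| < rho); split => //.
move=> _ _ [z [Cz Uz] <-] Wy [z' [Cz' Uz'] <-] Wy'.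
have hz : `|xbar - z| < rho by rewrite -(GH z Uz); apply: Wy; exists z.
have hz' : `|xbar - z'| < rho by rewrite -(GH z' Uz'); apply: Wy'; exists z'.
have rrho : r = 5 * rho by rewrite /rho mulrC divfK.
have WCz : WC z by apply: (Pr z _).2; lra.
have WCz' : WC z' by apply: (Pr z' _).2; lra.
have [g [Cg [gC [g0 [g1 gd]]]]] := WCprop z z' Cz WCz Cz' WCz'.
case: Cg => Og [oO [sub01 [dg cg']]].
have i01 : forall t : R, `[0, 1]%classic t -> 0 <= t <= 1.
  by move=> t; rewrite /= in_itv.
have o01 : forall t : R, 0 <= t <= 1 -> `[0, 1]%classic t.
  by move=> t; rewrite /= in_itv.
set d := z' - z. set e := H z' - H z.
pose w := d *m A.
have hd : `|d| <= 2 * rho.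
  have := ler_distD xbar z' z; rewrite -/d (distrC z' xbar); lra.
have segr : forall s, 0 <= s <= 1 -> `|xbar - (s *: d + z)| < r.
  move=> s /andP[s0 s1].
  have h1 : `|z - (s *: d + z)| = s * `|d|.
    by rewrite opprD addrCA subrr addr0 normrN normrZ ger0_norm.
  have h2 : s * `|d| <= `|d| by rewrite ler_piMl.
  have := ler_distD z xbar (s *: d + z); rewrite h1; lra.
have e1 : `|e - w| <= K * (`|d| * eta).
  pose F := (fun s : R => H (s *: d + z)) - (fun s : R => id (s *: w + 0)).
  have dF : forall s, 0 <= s <= 1 ->
      derivable F s 1 /\ 'D_1 F s = d *m (J (s *: d + z) - A).
    move=> s s01; have Up := (Pr _ (segr s s01)).1.1.
    have dHp : derivable H (s *: d + z) d by apply: diff_derivable; exact: dH.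
    have [dl1 Dl1] := derive_line dHp.
    have hid : derivable (@id 'rV[R]_m) (s *: w + 0) w by apply: derivable_id.
    have [dl2 Dl2] := derive_line hid.
    have dFs : derivable F s 1 := derivableB dl1 dl2.
    split => //.
    rewrite /F (deriveB dl1 dl2) Dl1 Dl2 derive_id deriveEjacobian ?mulmxBr //.
    exact: dH.
  have := @mvt_row _ _ F 0 1 (K * (`|d| * eta)) ler01.
  have -> : F 1 - F 0 = e - w.
    change (H (1 *: d + z) - (1 *: w + 0) - (H (0 *: d + z) - (0 *: w + 0)) = e - w).
    rewrite !scale1r !scale0r !add0r !addr0 /d subrK subr0.
    by rewrite /e addrAC.
  rewrite subr0 mulr1; apply.
    by move=> s /dF[].
  move=> s s01; have [_ ->] := dF s s01.
  apply: le_trans (norm_mulmx' _ _) _.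
  rewrite -/K (ler_wpM2l (ltW K0)) // (ler_wpM2l (normr_ge0 _)) //.
  by rewrite distrC; exact: (Pr _ (segr s s01)).1.2.
have e2 : `|d| <= 2 * cB * `|e|.
  have hw : `|w| <= `|e| + K * (`|d| * eta).
    have h := ler_normD e (w - e); rewrite [e + _]addrC subrK (distrC w e) in h.
    by apply: le_trans h _; rewrite lerD2l.
  have lb : `|d| <= cB * `|w| := lowb d.
  have ce : 0 <= cB * `|e| by rewrite mulr_ge0 // ltW.
  have iden : cB * (K * (`|d| * eta)) = (`|d| * eps) / 8.
    by rewrite /eta; field; rewrite !gt_eqF.
  have : `|d| * eps <= `|d| by rewrite ler_piMr.
  have := ler_wpM2l (ltW cB0) hw; rewrite mulrDr iden -/w.
  lra.
have gbd : forall t, 0 <= t <= 1 -> `|g t - z| <= 2 * `|d| * t.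
  move=> t /andP[t0 t1].
  have := @mvt_row _ _ g 0 t (2 * `|d|) t0.
  rewrite g0 subr0; apply.
    move=> s /andP[s0 st]; apply: dg; apply: sub01; apply: o01.
    by rewrite s0 (le_trans st t1).
  move=> s /andP[s0 st]; rewrite -derive1E.
  have := gd s (o01 s _); rewrite -/d => /(_ _) h.
  have {h} h : `|derive1 g s - d| <= eps' * `|d| by apply: h; rewrite s0 (le_trans st t1).
  have := ler_normD (derive1 g s - d) d; rewrite subrK.
  have : eps' * `|d| <= `|d| by rewrite ler_piMl.
  lra.
have gr : forall t, 0 <= t <= 1 -> `|xbar - g t| < r.
  move=> t t01; have := gbd t t01; case/andP: t01 => t0 t1.
  have : `|d| * t <= `|d| by rewrite ler_piMr.
  have := ler_distD z xbar (g t); rewrite (distrC z (g t)).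
  lra.
have nO' : forall t, Og t -> U (g t) -> nbhs t [set s | Og s /\ U (g s)].
  move=> t Ot Ugt; apply: filterI.
    by move: oO; rewrite openE => /(_ t Ot).
  have : differentiable g t by apply/derivable1_diffP; exact: dg.
  move=> /differentiable_continuous cg; apply: (cg U).
  by move: oU; rewrite openE => /(_ _ Ugt).
exists (H \o g); split; [|split; [|split; [|split]]].
- exists [set s | Og s /\ U (g s)]; split; [|split; [|split]].
  + by rewrite openE => t [Ot Ugt]; exact: nO'.
  + move=> t t01; split; first exact: sub01.
    exact: (Pr _ (gr t (i01 t t01))).1.1.
  + move=> t [Ot Ugt]; apply/derivable1_diffP; apply: differentiable_comp.
      by apply/derivable1_diffP; exact: dg.
    exact: dH.
  + move=> t; rewrite inE => -[Ot Ugt].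
    have eqn : \forall s \near t, derive1 (H \o g) s = derive1 g s *m J (g s).
      near=> s.
      have [Os Ugs] : Og s /\ U (g s) by near: s; exact: nO'.
      apply: derive1_comp_mx; last exact: dH.
      by apply/derivable1_diffP; exact: dg.
    have cg : {for t, continuous g}.
      apply: differentiable_continuous; apply/derivable1_diffP; exact: dg.
    have cprod : {for t, continuous (fun s => derive1 g s *m J (g s))}.
      apply: mulmx_cont; first by apply: cg'; rewrite inE.
      exact: (continuous_comp cg (cJ (g t) (mem_set Ugt))).
    rewrite /continuous_at (nbhs_singleton eqn).
    apply: cvg_trans cprod; apply: near_eq_cvg.
    by apply: filterS eqn => s ->.
- move=> t t01; exists (g t) => //; split; first exact: gC.
  exact: (Pr _ (gr t (i01 t t01))).1.1.
- by rewrite /= g0.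
- by rewrite /= g1.
- move=> t t01; have t01' := i01 t t01.
  have [[Ugt PJ] _] := Pr _ (gr t t01').
  rewrite derive1_comp_mx; last exact: dH; last first.
    by apply/derivable1_diffP; apply: dg; exact: sub01.
  set gp := derive1 g t; set Jt := jacobian H (g t).
  have -> : gp *m Jt - e = (gp - d) *m Jt + d *m (Jt - A) + (w - e).
    by rewrite mulmxBl mulmxBr /w !addrA !subrK.
  have hgp : `|gp - d| <= eps' * `|d| by rewrite /gp -/d; apply: gd.
  have hJA : `|Jt - A| <= eta by rewrite distrC.
  have hJt : `|Jt| <= a1.
    have h := ler_normD (Jt - A) A; rewrite subrK in h.
    have h2 : `|Jt - A| <= 1 := le_trans hJA eta1.
    apply: (le_trans h); rewrite /a1 addrC; exact: lerD (lexx _) h2.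
  have p1 : `|gp - d| * `|Jt| <= (eps' * `|d|) * a1.
    by apply: ler_pM => //; apply: normr_ge0.
  have p2 : `|d| * `|Jt - A| <= `|d| * eta.
    by rewrite (ler_wpM2l (normr_ge0 _)).
  have b1 := norm_mulmx' (gp - d) Jt.
  have b2 := norm_mulmx' d (Jt - A).
  have b1' : K * (`|gp - d| * `|Jt|) <= K * ((eps' * `|d|) * a1).
    by rewrite (ler_wpM2l (ltW K0)).
  have b2' : K * (`|d| * `|Jt - A|) <= K * (`|d| * eta).
    by rewrite (ler_wpM2l (ltW K0)).
  pose q := `|d| / cB.
  have a10 : 0 < a1 by apply: lt_le_trans a11.
  have id1 : K * ((eps' * `|d|) * a1) = q * eps / 4.
    by rewrite /q /eps'; field; rewrite !gt_eqF.
  have id2 : K * (`|d| * eta) = q * eps / 8.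
    by rewrite /q /eta; field; rewrite !gt_eqF.
  have hq : q <= 2 * `|e|.
    by rewrite /q ler_pdivrMr // mulrAC.
  have hq' : q * eps <= 2 * `|e| * eps.
    by rewrite (ler_wpM2r (ltW eps0p)).
  have he : `|e| * eps <= `|e| * eps0.
    by rewrite (ler_wpM2l (normr_ge0 _)).
  rewrite distrC in e1.
  apply: le_trans (ler_normD _ _) _.
  apply: le_trans (lerD (ler_normD _ _) (lexx _)) _.
  apply: le_trans (lerD (lerD (le_trans b1 b1') (le_trans b2 b2')) e1) _.
  rewrite -/K id1 id2.
  rewrite -mulrA in hq'; rewrite [eps0 * _]mulrC.
  exact: fin_ineq hq' he.
Unshelve. all: by end_near.
Qed.
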